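(* Let $F$ be a factbase and $\mathcal R$ a set of existential rules. For each terminating $\mathbf{O}$-chase derivation (resp. $\mathbf{SO}$-chase derivation) from $F$ and $\mathcal R$, there exists a breadth-first terminating $\mathbf{O}$-chase derivation (resp. $\mathbf{SO}$-chase derivation) from $F$ and $\mathcal R$ of smaller or equal depth.
   Context: First-order setting with constants and variables, no function symbols; a factbase is a set of atoms; a homomorphism from $A$ to $B$ is a substitution $\pi$ with $\pi(A)\subseteq B$. An existential rule $R=(B,H)$ is $\forall\bar x\forall\bar y(B(\bar x,\bar y)\to\exists\bar z\,H(\bar x,\bar z))$; its frontier is $\bar x$. A trigger $(R,\pi)$ on $F$ has $\pi:B\to F$ a homomorphism; $\pi^s$ maps each existential variable $z$ to a fresh variable $z_{(R,\pi)}$; $F\cup\pi^s(H)$ is the immediate derivation. A derivation from $F$ and $\mathcal R$ is a (possibly infinite) sequence $D_0=(\emptyset,\emptyset,F)$, $D_i=(R_i,\pi_i,F_i)$, $F_i$ the immediate derivation from $F_{i-1}$ through $(R_i,\pi_i)$, triggers pairwise distinct. For a derivation with last factbase $F_n$, a trigger $(R,\pi)$ is $\mathbf{O}$-applicable if $\pi:B\to F_n$ is a homomorphism, and $\mathbf{SO}$-applicable if moreover no trigger $(R,\pi')$ already in the derivation has $\pi'$ equal to $\pi$ on the frontier of $R$. An $\mathbf{O}$-chase derivation is any derivation; an $\mathbf{SO}$-chase derivation is one where each trigger is $\mathbf{SO}$-applicable on its prefix. Rank: atoms of $F$ have rank 0; another atom $A$ has rank $1+\max_{A'\in\pi(B)}\mathrm{rank}(A')$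 for the first trigger $(R,\pi)$ with $A\in\pi^s(H)$; a trigger has rank $1+\max_{A'\in\pi(B)}\mathrm{rank}(A')$. Depth of a finite derivation: maximal rank of its atoms. A derivation is $\mathrm{X}$-breadth-first if (1) its triggers appear in non-decreasing rank, and (2) for each rank $k$ of a trigger, letting $D_i$ be the last element whose trigger has rank $k$, every trigger $\mathrm{X}$-applicable on $D_1,\dots,D_i$ has rank $k+1$. ''Breadth-first $\mathrm{X}$-chase derivation'' means $\mathrm{X}$-breadth-first $\mathrm{X}$-chase derivation. An $\mathrm{X}$-chase derivation is exhaustive if any trigger $\mathrm{X}$-applicable on $D_1,\dots,D_i$ is either applied at some later $D_k$ ($k\ge i$) or ceases to be $\mathrm{X}$-applicable on some $D_1,\dots,D_k$; terminating means exhaustive and finite. *)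

(* Defs.v *)
From Stdlib Require Import List Arith.
Import ListNotations.

(* A fresh variable is named by the
   trigger (R,pi): the rule (body, head), the image under pi of the body
   variables (listed in a canonical order), and the existential variable z. *)
Inductive term : Type :=
| Cst  (c : nat)
| Var  (x : nat)
| Null (b h : list (nat * list term)) (img : list term) (z : nat).

Definition atom : Type := (nat * list term)%type.

Definition factbase : Type := atom -> Prop.

Record rule : Type := mkRule { body : list atom; head : list atom }.

Definition plain_term (u : term) : Prop :=
  match u with Null _ _ _ _ => False | _ => True end.
Definition plain_atom (a : atom) : Prop := Forall plain_term (snd a).
Definition wf_rule (R : rule) : Prop :=
  Forall plain_atom (body R) /\ Forall plain_atom (head R).

Definition vars_term (u : term) : list nat :=
  match u with Var x => [x] | _ => [] end.
Definition vars_atoms (l : list atom) : list nat :=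
  flat_map (fun a => flat_map vars_term (snd a)) l.

Definition subst (s : nat -> term) (u : term) : term :=
  match u with Var x => s x | _ => u end.
Definition subst_atom (s : nat -> term) (a : atom) : atom :=
  (fst a, map (subst s) (snd a)).

Definition hom (s : nat -> term) (B : list atom) (G : factbase) : Prop :=
  forall b, In b B -> G (subst_atom s b).

Definition trig : Type := (rule * (nat -> term))%type.
Definition trig_dflt : trig := (mkRule [] [], fun _ => Cst 0).

Definition same_trig (t t' : trig) : Prop :=
  fst t = fst t' /\
  forall x, In x (vars_atoms (body (fst t))) -> snd t x = snd t' x.

Definition sk (t : trig) (x : nat) : term :=
  if existsb (Nat.eqb x) (vars_atoms (body (fst t))) then snd t x
  else Null (body (fst t)) (head (fst t))
            (map (snd t) (vars_atoms (body (fst t)))) x.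

Definition produced (t : trig) (a : atom) : Prop :=
  In a (map (subst_atom (sk t)) (head (fst t))).

(* A finite derivation D_0, D_1, ..., D_n is represented by the list of its
   triggers [(R_1,pi_1); ...; (R_n,pi_n)] (D_i is [nth (i-1) D]); the
   prefix D_1..D_i is [firstn i D].  [fb F D] is the last factbase F_n. *)
Definition fb (F : factbase) (D : list trig) : factbase :=
  fun a => F a \/ exists t, In t D /\ produced t a.

Definition derivation (Rs : rule -> Prop) (F : factbase) (D : list trig) : Prop :=
  (forall i, i < length D ->
     Rs (fst (nth i D trig_dflt)) /\
     hom (snd (nth i D trig_dflt)) (body (fst (nth i D trig_dflt)))
         (fb F (firstn i D))) /\
  (forall i j, i < j -> j < length D ->
     ~ same_trig (nth i D trig_dflt) (nth j D trig_dflt)).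

Inductive chase_variant : Type := O | SO.

Definition frontier (R : rule) (x : nat) : Prop :=
  In x (vars_atoms (body R)) /\ In x (vars_atoms (head R)).

Definition O_applicable (Rs : rule -> Prop) (F : factbase) (D : list trig)
    (t : trig) : Prop :=
  Rs (fst t) /\ hom (snd t) (body (fst t)) (fb F D) /\
  ~ (exists t', In t' D /\ same_trig t' t).

Definition SO_applicable (Rs : rule -> Prop) (F : factbase) (D : list trig)
    (t : trig) : Prop :=
  O_applicable Rs F D t /\
  ~ (exists t', In t' D /\ fst t' = fst t /\
        forall x, frontier (fst t) x -> snd t' x = snd t x).

Definition applicable (X : chase_variant) :=
  match X with O => O_applicable | SO => SO_applicable end.

Definition chase_derivation (X : chase_variant) (Rs : rule -> Prop)
    (F : factbase) (D : list trig) : Prop :=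
  derivation Rs F D /\
  forall i, i < length D ->
    applicable X Rs F (firstn i D) (nth i D trig_dflt).

(* exhaustive (for a finite derivation); finite + exhaustive = terminating *)
Definition exhaustive (X : chase_variant) (Rs : rule -> Prop)
    (F : factbase) (D : list trig) : Prop :=
  forall i t, i <= length D -> applicable X Rs F (firstn i D) t ->
    (exists k, i <= k /\ k < length D /\ same_trig (nth k D trig_dflt) t) \/
    (exists k, i <= k /\ k <= length D /\
               ~ applicable X Rs F (firstn k D) t).

Definition max_list (l : list nat) : nat := fold_right Nat.max 0 l.

Inductive arank (F : factbase) (D : list trig) : atom -> nat -> Prop :=
| arank_base a : F a -> arank F D a 0
| arank_step a j rs :
    ~ F a -> j < length D ->
    produced (nth j D trig_dflt) a ->
    (forall j', j' < j -> ~ produced (nth j' D trig_dflt) a) ->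
    Forall2 (arank F D)
      (map (subst_atom (snd (nth j D trig_dflt)))
           (body (fst (nth j D trig_dflt)))) rs ->
    arank F D a (S (max_list rs)).

Definition trank (F : factbase) (D : list trig) (t : trig) (r : nat) : Prop :=
  exists rs, Forall2 (arank F D)
               (map (subst_atom (snd t)) (body (fst t))) rs /\
             r = S (max_list rs).

Definition depth_le (F : factbase) (D : list trig) (d : nat) : Prop :=
  forall a r, arank F D a r -> r <= d.

Definition breadth_first (X : chase_variant) (Rs : rule -> Prop)
    (F : factbase) (D : list trig) : Prop :=
  (forall j j' rj rj', j <= j' -> j' < length D ->
     trank F D (nth j D trig_dflt) rj -> trank F D (nth j' D trig_dflt) rj' ->
     rj <= rj') /\
  (forall j k, j < length D -> trank F D (nth j D trig_dflt) k ->
     (forall j', j < j' -> j' < length D -> ~ trank F D (nth j' D trig_dflt) k) ->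
     forall t, applicable X Rs F (firstn (S j) D) t ->
       trank F (firstn (S j) D) t (S k)).

(* Main.v *)
Require Import Defs.
From Stdlib Require Import List Arith Lia Classical ClassicalEpsilon.
Import ListNotations.
Require Import Defs.

Definition tr (D : list trig) i := nth i D trig_dflt.

Lemma firstn_S_nth {A} (l : list A) n d : n < length l ->
  firstn (S n) l = firstn n l ++ [nth n l d].
Proof.
  revert n; induction l as [|x l IH]; intros n H; simpl in *; [lia|].
  destruct n; simpl; [reflexivity|]. rewrite IH by lia. reflexivity.
Qed.

Lemma In_firstn_nth {A} (l : list A) n t d : In t (firstn n l) ->
  exists k, k < n /\ k < length l /\ t = nth k l d.
Proof.
  revert n; induction l as [|x l IH]; intros n H; destruct n; simpl in *; try tauto.
  destruct H as [<-|H]. exists 0; repeat split; lia.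
  destruct (IH _ H) as (k & ? & ? & ->). exists (S k); repeat split; auto; lia.
Qed.

Lemma nth_In_firstn {A} (l : list A) n k d : k < n -> k < length l ->
  In (nth k l d) (firstn n l).
Proof.
  intros. assert (E : nth k l d = nth k (firstn n l) d).
  { rewrite nth_firstn. destruct (Nat.ltb_spec k n); [reflexivity|lia]. }
  rewrite E. apply nth_In. rewrite length_firstn. lia.
Qed.

Lemma firstn_mono_In {A} (l : list A) i j t : i <= j -> In t (firstn i l) -> In t (firstn j l).
Proof.
  revert i j; induction l as [|x l IH]; intros i j Hij H; destruct i, j; simpl in *; try tauto; try lia.
  destruct H; [auto| right; apply (IH i); auto; lia].
Qed.

Lemma max_list_ge l x : In x l -> x <= max_list l.
Proof. induction l; simpl; intros H; [tauto|]. destruct H; subst; lia || (specialize (IHl H); lia). Qed.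

Lemma max_list_le l k : (forall x, In x l -> x <= k) -> max_list l <= k.
Proof. induction l; simpl; intros H; [lia|]. pose proof (H a (or_introl eq_refl)).
  assert (max_list l <= k) by (apply IHl; auto). lia. Qed.

Lemma Forall2_In_r {A B} (P : A -> B -> Prop) l rs x :
  Forall2 P l rs -> In x l -> exists r, In r rs /\ P x r.
Proof. induction 1; simpl; intros H'; [tauto|]. destruct H' as [<-|H'].
  eexists; split; [left; reflexivity|assumption].
  destruct (IHForall2 H') as (r & ? & ?). exists r; split; auto. Qed.

Lemma Forall2_In_l {A B} (P : A -> B -> Prop) l rs r :
  Forall2 P l rs -> In r rs -> exists x, In x l /\ P x r.
Proof. induction 1; simpl; intros H'; [tauto|]. destruct H' as [<-|H'].
  eexists; split; [left; reflexivity|assumption].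
  destruct (IHForall2 H') as (z & ? & ?). exists z; split; auto. Qed.

Lemma exists_Forall2 {A B} (P : A -> B -> Prop) l :
  (forall x, In x l -> exists r, P x r) -> exists rs, Forall2 P l rs.
Proof. induction l; intros H. exists []; constructor.
  destruct (H a (or_introl eq_refl)) as [r Hr].
  destruct IHl as [rs Hrs]. intros; apply H; right; auto.
  exists (r :: rs); constructor; auto. Qed.

Lemma Forall2_map_l {A A' B} (P : A' -> B -> Prop) (f : A -> A') l rs :
  Forall2 (fun x r => P (f x) r) l rs -> Forall2 P (map f l) rs.
Proof. induction 1; simpl; constructor; auto. Qed.

Lemma Forall2_le_max (P Q : atom -> nat -> Prop) l rs :
  Forall2 P l rs ->
  (forall x r, In x l -> P x r -> exists r', Q x r' /\ r' <= r) ->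
  exists rs', Forall2 Q l rs' /\ max_list rs' <= max_list rs.
Proof. induction 1; intros H'. exists []; split; [constructor|simpl; lia].
  destruct (H' x y (or_introl eq_refl) H) as (r' & ? & ?).
  destruct IHForall2 as (rs' & ? & ?). intros; apply H'; auto; right; auto.
  exists (r' :: rs'); split; [constructor; auto|simpl; lia]. Qed.

Lemma min_nat (P : nat -> Prop) : (exists n, P n) -> exists n, P n /\ forall m, P m -> n <= m.
Proof.
  intros [n Hn]. induction n as [n IH] using lt_wf_ind.
  destruct (classic (exists m, m < n /\ P m)) as [(m & ? & ?)|Hno].
  - apply (IH m); auto.
  - exists n; split; auto. intros m Hm. destruct (Nat.lt_ge_cases m n); auto.
    exfalso; apply Hno; eauto.
Qed.

Lemma switch_nat (P : nat -> Prop) a b : a <= b -> P a -> ~ P b ->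
  exists n, a <= n /\ n < b /\ P n /\ ~ P (S n).
Proof.
  intros Hab. induction Hab; intros Ha Hb. tauto.
  destruct (classic (P m)). exists m; repeat split; auto.
  destruct (IHHab Ha H) as (n & ? & ? & ? & ?).
  exists n; repeat split; auto; lia.
Qed.

Lemma inj_le (f : nat -> nat) n m : (forall i, i < n -> f i < m) ->
  (forall i k, i < n -> k < n -> f i = f k -> i = k) -> n <= m.
Proof.
  intros Hr Hi. rewrite <- (length_seq n 0), <- (length_seq m 0), <- (length_map f).
  apply NoDup_incl_length.
  - apply NoDup_map_NoDup_ForallPairs; [|apply seq_NoDup].
    intros x y Hx Hy. apply in_seq in Hx, Hy. apply Hi; lia.
  - intros y Hy. apply in_map_iff in Hy as (x & <- & Hx). apply in_seq in Hx.
    apply in_seq. specialize (Hr x). lia.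
Qed.

Lemma inj_surj (f : nat -> nat) n : (forall i, i < n -> f i < n) ->
  (forall i k, i < n -> k < n -> f i = f k -> i = k) ->
  forall q, q < n -> exists i, i < n /\ f i = q.
Proof.
  intros Hr Hi q Hq.
  assert (ND : NoDup (map f (seq 0 n))).
  { apply NoDup_map_NoDup_ForallPairs; [|apply seq_NoDup].
    intros x y Hx Hy. apply in_seq in Hx, Hy. apply Hi; lia. }
  assert (I : incl (map f (seq 0 n)) (seq 0 n)).
  { intros y Hy. apply in_map_iff in Hy as (x & <- & Hx). apply in_seq in Hx.
    apply in_seq. specialize (Hr x). lia. }
  pose proof (NoDup_length_incl (l' := seq 0 n) ND) as H.
  assert (Hin : In q (map f (seq 0 n))).
  { apply H. rewrite length_map, length_seq; lia. exact I. apply in_seq; lia. }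
  apply in_map_iff in Hin as (x & ? & Hx). apply in_seq in Hx. exists x; split; auto; lia.
Qed.


Section Ranks.
Variable F : factbase.

Lemma arank_ind' (D : list trig) (P : atom -> nat -> Prop) :
  (forall a, F a -> P a 0) ->
  (forall a j rs, ~ F a -> j < length D -> produced (tr D j) a ->
     (forall j', j' < j -> ~ produced (tr D j') a) ->
     Forall2 (arank F D) (map (subst_atom (snd (tr D j))) (body (fst (tr D j)))) rs ->
     Forall2 P (map (subst_atom (snd (tr D j))) (body (fst (tr D j)))) rs ->
     P a (S (max_list rs))) ->
  forall a r, arank F D a r -> P a r.
Proof.
  intros Hb Hs. fix IH 3. intros a r H. destruct H as [a Fa|a j rs nF lt pr mn FA].
  - apply Hb; auto.
  - apply (Hs a j rs nF lt pr mn FA).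
    exact ((fix G l rs (FA : Forall2 (arank F D) l rs) : Forall2 P l rs :=
      match FA in Forall2 _ l rs return Forall2 P l rs with
      | Forall2_nil _ => Forall2_nil _
      | @Forall2_cons _ _ _ x y l' rs' Hxy Hr => Forall2_cons x y (IH x y Hxy) (G l' rs' Hr) end) _ _ FA).
Qed.

Lemma Forall2_fun {A} (Q : A -> nat -> Prop) l rs rs' :
  Forall2 (fun x r => forall r', Q x r' -> r = r') l rs -> Forall2 Q l rs' -> rs = rs'.
Proof. intros H; revert rs'; induction H; intros rs' H'; inversion H'; subst; auto.
  f_equal; auto. Qed.

Lemma arank_fun D a r1 r2 : arank F D a r1 -> arank F D a r2 -> r1 = r2.
Proof.
  intros H; revert r2. pattern a, r1. revert a r1 H.
  apply arank_ind'.
  - intros a Fa r2 H2. inversion H2; subst; auto. contradiction.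
  - intros a j rs nF lt pr mn FA IH r2 H2. inversion H2 as [? Fa|? j2 rs2 nF2 lt2 pr2 mn2 FA2]; subst.
    contradiction.
    assert (j = j2).
    { destruct (Nat.lt_trichotomy j j2) as [h|[h|h]]; auto.
      exfalso; apply (mn2 j h pr). exfalso; apply (mn j2 h pr2). }
    subst j2. f_equal. f_equal. eapply Forall2_fun; [exact IH|exact FA2].
Qed.

Lemma arank_fb D a r : arank F D a r -> fb F D a.
Proof. intros H; destruct H. left; auto. right. exists (tr D j); split; auto. apply nth_In; auto. Qed.

Lemma arank_up D i a r : arank F (firstn i D) a r -> arank F D a r.
Proof.
  revert a r. apply arank_ind'.
  - intros; constructor; auto.
  - intros a j rs nF lt pr mn FA IH. rewrite length_firstn in lt.
    unfold tr in *. rewrite nth_firstn in *. destruct (Nat.ltb_spec j i); [|lia].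
    apply arank_step with j; auto; try lia.
    intros j' hj'. specialize (mn j' hj'). rewrite nth_firstn in mn.
    destruct (Nat.ltb_spec j' i); [auto|lia].
Qed.

Lemma fb_firstn_S D i a : i < length D ->
  fb F (firstn (S i) D) a <-> fb F (firstn i D) a \/ produced (tr D i) a.
Proof.
  intros Hi. rewrite (firstn_S_nth D i trig_dflt Hi). unfold fb. split.
  - intros [H|(t & Ht & Hp)]; auto. apply in_app_or in Ht as [Ht|[<-|[]]]; eauto.
  - intros [[H|(t & Ht & Hp)]|H]; auto; right.
    exists t; split; auto; apply in_or_app; auto.
    exists (tr D i); split; auto; apply in_or_app; right; left; auto.
Qed.

Lemma fb_mono D i j a : i <= j -> fb F (firstn i D) a -> fb F (firstn j D) a.
Proof. intros H [h|(t & Ht & Hp)]; [left; auto|right; exists t; split; auto].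
  eapply firstn_mono_In; eauto. Qed.

Lemma fb_firstn_sub D i a : fb F (firstn i D) a -> fb F D a.
Proof. intros [h|(t & Ht & Hp)]; [left; auto|right; exists t; split; auto].
  apply In_firstn_nth with (d:=trig_dflt) in Ht as (k & ? & ? & ->). apply nth_In; auto. Qed.

Definition wfd (D : list trig) := forall i, i < length D ->
  hom (snd (tr D i)) (body (fst (tr D i))) (fb F (firstn i D)).

Lemma arank_exists_pref D : wfd D -> forall i a, fb F (firstn i D) a ->
  exists r, arank F (firstn i D) a r.
Proof.
  intros W. induction i; intros a Ha.
  - destruct Ha as [Fa|(t & [] & _)]. exists 0; constructor; auto.
  - destruct (Nat.lt_ge_cases i (length D)) as [Hi|Hi].
    2:{ rewrite (firstn_all2 (n:=S i) D) in * by lia. rewrite (firstn_all2 (n:=i) D) in IHi by lia.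
        apply IHi; auto. }
    destruct (classic (fb F (firstn i D) a)) as [Hold|Hnew].
    + destruct (IHi a Hold) as [r Hr]. exists r.
      apply (arank_up _ i). rewrite firstn_firstn. replace (Nat.min i (S i)) with i by lia. auto.
    + apply fb_firstn_S in Ha as [Ha|Hp]; auto; [contradiction|].
      assert (nF : ~ F a) by (intro; apply Hnew; left; auto).
      destruct (exists_Forall2 (arank F (firstn (S i) D))
        (map (subst_atom (snd (tr D i))) (body (fst (tr D i))))) as [rs Hrs].
      { intros x Hx. apply in_map_iff in Hx as (b & <- & Hb).
        destruct (IHi _ (W i Hi b Hb)) as [r Hr]. exists r.
        apply (arank_up _ i). rewrite firstn_firstn. replace (Nat.min i (S i)) with i by lia. auto. }
      exists (S (max_list rs)). 
      assert (E : forall k, k <= i -> tr (firstn (S i) D) k = tr D k).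
      { intros k hk. unfold tr. rewrite nth_firstn. destruct (Nat.ltb_spec k (S i)); auto; lia. }
      apply arank_step with i; auto.
      * rewrite length_firstn; lia.
      * unfold tr in E. rewrite (E i); auto.
      * intros j' hj' Hp'. apply Hnew. right. exists (tr D j'); split.
        apply nth_In_firstn; lia. unfold tr in E; rewrite (E j') in Hp' by lia. auto.
      * unfold tr in E; rewrite (E i); auto.
Qed.

Lemma arank_exists D a : wfd D -> fb F D a -> exists r, arank F D a r.
Proof. intros W H. rewrite <- (firstn_all D) in H. destruct (arank_exists_pref D W _ a H) as [r Hr].
  exists r. rewrite firstn_all in Hr; auto. Qed.

Lemma arank_down D i a r : wfd D -> fb F (firstn i D) a -> arank F D a r -> arank F (firstn i D) a r.
Proof. intros W H Hr. destruct (arank_exists_pref D W i a H) as [r' Hr'].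
  rewrite (arank_fun D a r r'); auto. eapply arank_up; eauto. Qed.

Definition trank_l (D : list trig) (L : list atom) (m : nat) : Prop :=
  exists rs, Forall2 (arank F D) L rs /\ m = S (max_list rs).

Definition bimg (t : trig) := map (subst_atom (snd t)) (body (fst t)).

Lemma trank_l_eq D t m : trank F D t m <-> trank_l D (bimg t) m.
Proof. reflexivity. Qed.

Lemma trank_l_fun D L m1 m2 : trank_l D L m1 -> trank_l D L m2 -> m1 = m2.
Proof. intros (rs1 & H1 & ->) (rs2 & H2 & ->). f_equal. f_equal.
  eapply Forall2_fun; [|exact H2]. clear H2. induction H1; constructor; auto.
  intros; eapply arank_fun; eauto. Qed.

Lemma trank_l_up D i L m : trank_l (firstn i D) L m -> trank_l D L m.
Proof. intros (rs & H & ->). exists rs; split; auto. clear -H. induction H; constructor; auto.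
  eapply arank_up; eauto. Qed.

Lemma trank_l_exists D L : wfd D -> (forall a, In a L -> fb F D a) -> exists m, trank_l D L m.
Proof. intros W H. destruct (exists_Forall2 (arank F D) L) as [rs Hrs].
  intros; apply arank_exists; auto. exists (S (max_list rs)); exists rs; auto. Qed.

Lemma trank_l_down D i L m : wfd D -> (forall a, In a L -> fb F (firstn i D) a) ->
  trank_l D L m -> trank_l (firstn i D) L m.
Proof. intros W H (rs & Hr & ->). exists rs; split; auto.
  induction Hr; constructor. apply arank_down; auto. apply H; left; auto.
  apply IHHr. intros; apply H; right; auto. Qed.

Lemma trank_l_ge D L m x r : trank_l D L m -> In x L -> arank F D x r -> r < m.
Proof. intros (rs & H & ->) Hx Hr. destruct (Forall2_In_r _ _ _ _ H Hx) as (r' & Hin & Hr').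
  rewrite (arank_fun D x r r'); auto. apply max_list_ge in Hin. lia. Qed.

Lemma hom_bimg s B G : hom s B G <-> forall a, In a (map (subst_atom s) B) -> G a.
Proof. split. intros H a Ha. apply in_map_iff in Ha as (b & <- & Hb); auto.
  intros H b Hb. apply H, in_map; auto. Qed.

End Ranks.


Definition isnull (u : term) : Prop := match u with Null _ _ _ _ => True | _ => False end.
Definition maph (h : term -> term) (a : atom) : atom := (fst a, map h (snd a)).
Definition th (h : term -> term) (t : trig) : trig := (fst t, fun x => h (snd t x)).
Definition bvars (t : trig) := vars_atoms (body (fst t)).
Definition nullof (t : trig) z := Null (body (fst t)) (head (fst t)) (map (snd t) (bvars t)) z.
Definition equivX (X : chase_variant) (t s : trig) : Prop :=
  fst s = fst t /\ match X with
  | O => forall x, In x (bvars t) -> snd s x = snd t x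
  | SO => forall x, frontier (fst t) x -> snd s x = snd t x end.
Definition occurs F L u := exists a, fb F L a /\ In u (snd a).
Definition fixnn (h : term -> term) := forall u, ~ isnull u -> h u = u.

Lemma vars_in x B : In x (vars_atoms B) <-> exists b, In b B /\ In (Var x) (snd b).
Proof.
  unfold vars_atoms. rewrite in_flat_map. split.
  - intros (b & Hb & Hx). apply in_flat_map in Hx as (u & Hu & Hx).
    destruct u; simpl in Hx; try tauto. destruct Hx as [<-|[]]. eauto.
  - intros (b & Hb & Hx). exists b; split; auto. apply in_flat_map. exists (Var x); simpl; auto.
Qed.

Lemma plain_in a u : plain_atom a -> In u (snd a) -> ~ isnull u.
Proof. unfold plain_atom. rewrite Forall_forall. intros H Hu. specialize (H u Hu).
  destruct u; simpl in *; tauto. Qed.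

Lemma subst_th b s h : plain_atom b -> fixnn h ->
  subst_atom (fun x => h (s x)) b = maph h (subst_atom s b).
Proof. intros Hp Hh. unfold subst_atom, maph; simpl. f_equal. rewrite map_map.
  apply map_ext_in. intros u Hu. pose proof (plain_in _ _ Hp Hu).
  destruct u; simpl in *; auto; rewrite Hh; simpl; auto. Qed.

Lemma maph_plain a h : plain_atom a -> fixnn h -> maph h a = a.
Proof. intros Hp Hh. destruct a as [p l]; unfold maph; simpl. f_equal.
  rewrite <- (map_id l) at 2. apply map_ext_in. intros u Hu. apply Hh. eapply plain_in; eauto. Qed.

Lemma bimg_th t h : Forall plain_atom (body (fst t)) -> fixnn h ->
  bimg (th h t) = map (maph h) (bimg t).
Proof. intros Hp Hh. unfold bimg, th; simpl. rewrite map_map. apply map_ext_in.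
  intros b Hb. apply subst_th; auto. rewrite Forall_forall in Hp; auto. Qed.

Lemma existsb_in x l : existsb (Nat.eqb x) l = true <-> In x l.
Proof. rewrite existsb_exists. split. intros (y & H & E). apply Nat.eqb_eq in E; subst; auto.
  intros H; exists x; split; auto; apply Nat.eqb_refl. Qed.

Lemma sk_in t x : In x (bvars t) -> sk t x = snd t x.
Proof. intros H. unfold sk. apply existsb_in in H. unfold bvars in H. rewrite H. auto. Qed.

Lemma sk_out t x : ~ In x (bvars t) -> sk t x = nullof t x.
Proof. intros H. unfold sk. destruct (existsb (Nat.eqb x) (vars_atoms (body (fst t)))) eqn:E.
  apply existsb_in in E. contradiction. reflexivity. Qed.

Lemma same_trig_sym t t' : same_trig t t' -> same_trig t' t.
Proof. intros [E H]. split; auto. intros x Hx. rewrite <- E in Hx. symmetry; auto. Qed.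

Lemma nullof_inj t t' z z' : nullof t z = nullof t' z' -> z = z' /\ same_trig t t'.
Proof. unfold nullof. intros E. injection E as E1 E2 E3 E4. split; auto. split.
  destruct t as [[b h] s], t' as [[b' h'] s']; simpl in *; subst; auto.
  intros x Hx. unfold bvars in E3. rewrite <- E1 in E3. apply (map_ext_in_iff) with (a:=x) in E3; auto.
Qed.

Lemma prod_map t s h A0 : wf_rule (fst t) -> fst s = fst t ->
  (forall x, frontier (fst t) x -> snd s x = h (snd t x)) ->
  (forall z, ~ In z (bvars t) -> h (nullof t z) = nullof s z) -> fixnn h ->
  In A0 (head (fst t)) -> maph h (subst_atom (sk t) A0) = subst_atom (sk s) A0.
Proof.
  intros [_ Hw] Es Hf Hn Hh HA. assert (Hp : plain_atom A0) by (rewrite Forall_forall in Hw; auto).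
  unfold maph, subst_atom; simpl. f_equal. rewrite map_map. apply map_ext_in. intros u Hu.
  pose proof (plain_in _ _ Hp Hu) as Hnn. destruct u; simpl in *; try tauto.
  - apply Hh; simpl; auto.
  - assert (Bv : bvars s = bvars t) by (unfold bvars; rewrite Es; auto).
    destruct (in_dec Nat.eq_dec x (bvars t)) as [Hi|Hi].
    + rewrite (sk_in t x Hi), sk_in by (rewrite Bv; auto). symmetry. apply Hf. split; auto.
      apply vars_in. eauto.
    + rewrite (sk_out t x Hi), sk_out by (rewrite Bv; auto). apply Hn; auto.
Qed.

Lemma produced_terms t a u : wf_rule (fst t) -> produced t a -> In u (snd a) ->
  ~ isnull u \/ (exists x, In x (bvars t) /\ u = snd t x) \/
  (exists z, ~ In z (bvars t) /\ u = nullof t z).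
Proof.
  intros [_ Hw] Hp Hu. unfold produced in Hp. apply in_map_iff in Hp as (A0 & <- & HA).
  assert (Hpl : plain_atom A0) by (rewrite Forall_forall in Hw; auto).
  unfold subst_atom in Hu; simpl in Hu. apply in_map_iff in Hu as (v & <- & Hv).
  pose proof (plain_in _ _ Hpl Hv). destruct v; simpl in *; try tauto.
  destruct (in_dec Nat.eq_dec x (bvars t)) as [Hi|Hi].
  - right; left. exists x; split; auto. apply sk_in; auto.
  - right; right. exists x; split; auto. apply sk_out; auto.
Qed.

Lemma occurs_snd F L t x : In x (bvars t) -> hom (snd t) (body (fst t)) (fb F L) ->
  occurs F L (snd t x).
Proof. intros Hx Hh. apply vars_in in Hx as (b & Hb & Hv). exists (subst_atom (snd t) b).
  split; auto. unfold subst_atom; simpl. apply in_map_iff. exists (Var x); auto. Qed.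

Lemma equivX_front X t s : equivX X t s -> fst s = fst t /\ forall x, frontier (fst t) x -> snd s x = snd t x.
Proof. destruct X; intros [E H]; split; auto. intros x [Hx _]; auto. Qed.

Lemma equivX_ext X t t' s : fst t = fst t' -> (forall x, In x (bvars t) -> snd t x = snd t' x) ->
  equivX X t s -> equivX X t' s.
Proof. intros E Ha [E2 H]. assert (Bv : bvars t' = bvars t) by (unfold bvars; rewrite E; auto).
  split; [congruence|]. destruct X; intros x Hx.
  - rewrite Bv in Hx. rewrite <- Ha; auto.
  - rewrite <- E in Hx. rewrite <- Ha; auto. destruct Hx; auto. Qed.

Lemma bimg_ext t t' : fst t = fst t' -> (forall x, In x (bvars t) -> snd t x = snd t' x) ->
  bimg t = bimg t'.
Proof. intros E Ha. unfold bimg. rewrite <- E. apply map_ext_in. intros b Hb.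
  unfold subst_atom. f_equal. apply map_ext_in. intros u Hu. destruct u; simpl; auto.
  apply Ha. apply vars_in. eauto. Qed.

Lemma app_no_equiv X Rs F L t t' : applicable X Rs F L t -> In t' L -> ~ equivX X t t'.
Proof.
  intros Ha Hin [E He]. destruct X; simpl in Ha.
  - destruct Ha as (_ & _ & Hn). apply Hn. exists t'; split; auto. split; auto.
    intros x Hx. apply He. unfold bvars; rewrite <- E; auto.
  - destruct Ha as ((_ & _ & Hn) & Hn2). apply Hn2. exists t'; split; auto.
Qed.

Lemma notapp_equiv X Rs F L t : Rs (fst t) -> hom (snd t) (body (fst t)) (fb F L) ->
  ~ applicable X Rs F L t -> exists t', In t' L /\ equivX X t t'.
Proof.
  intros HR Hh Hna. destruct X; simpl in Hna; unfold O_applicable, SO_applicable in Hna.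
  - apply NNPP. intros Hn. apply Hna. repeat split; auto. intros (t' & Hin & [E Hs]).
    apply Hn. exists t'; split; auto. split; auto. intros x Hx. apply Hs. unfold bvars in Hx; rewrite E; auto.
  - apply NNPP. intros Hn. apply Hna. repeat split; auto.
    intros (t' & Hin & [E Hs]). apply Hn. exists t'; split; auto. split; auto.
    intros x [Hx _]. apply Hs. unfold bvars in Hx; rewrite E; auto.
Qed.

Lemma deriv_distinct Rs F D i j : derivation Rs F D -> i <> j -> i < length D -> j < length D ->
  ~ same_trig (tr D i) (tr D j).
Proof. intros [_ Hd] Hij Hi Hj Hs. destruct (Nat.lt_gt_cases i j) as [[h|h] _]; auto.
  apply (Hd i j); auto. apply (Hd j i); auto. apply same_trig_sym; auto. Qed.

Lemma deriv_wfd Rs F D : derivation Rs F D -> wfd F D.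
Proof. intros [Hd _] i Hi. apply Hd; auto. Qed.


Lemma occurs_mono F D i j u : i <= j -> occurs F (firstn i D) u -> occurs F (firstn j D) u.
Proof. intros H (a & Ha & Hu). exists a; split; auto. eapply fb_mono; eauto. Qed.

Lemma occurs_S F D i u : i < length D -> wf_rule (fst (tr D i)) ->
  hom (snd (tr D i)) (body (fst (tr D i))) (fb F (firstn i D)) ->
  occurs F (firstn (S i) D) u -> occurs F (firstn i D) u \/ ~ isnull u \/
  exists z, ~ In z (bvars (tr D i)) /\ u = nullof (tr D i) z.
Proof.
  intros Hi Hw Hh (a & Ha & Hu). apply fb_firstn_S in Ha as [Ha|Ha]; auto.
  left; exists a; auto.
  destruct (produced_terms _ _ _ Hw Ha Hu) as [H|[(x & Hx & ->)|H]]; auto.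
  left. apply occurs_snd; auto.
Qed.

Lemma occurs_cases F A : (forall a, F a -> plain_atom a) -> wfd F A ->
  (forall k, k < length A -> wf_rule (fst (tr A k))) ->
  forall i u, occurs F (firstn i A) u -> ~ isnull u \/
   exists k z, k < i /\ k < length A /\ ~ In z (bvars (tr A k)) /\ u = nullof (tr A k) z.
Proof.
  intros HF W HW. induction i; intros u Hu.
  - destruct Hu as (a & [Fa|(t & [] & _)] & Hu). left. eapply plain_in; eauto.
  - destruct (Nat.lt_ge_cases i (length A)) as [Hi|Hi].
    + destruct (occurs_S F A i u Hi (HW i Hi) (W i Hi) Hu) as [H|[H|(z & Hz & ->)]]; auto.
      * destruct (IHi u H) as [H'|(k & z & ? & ? & ? & ->)]; auto. right; exists k, z; repeat split; auto.
      * right; exists i, z; repeat split; auto.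
    + rewrite (firstn_all2 (n:=S i)) in Hu by lia. rewrite <- (firstn_all2 (n:=i) A) in Hu by lia.
      destruct (IHi u Hu) as [H'|(k & z & ? & ? & ? & ->)]; auto. right; exists k, z; repeat split; auto.
Qed.

Section HomExt.
Variable X : chase_variant.
Variable F : factbase.
Variable Rs : rule -> Prop.
Hypothesis HF : forall a, F a -> plain_atom a.
Hypothesis HR : forall R, Rs R -> wf_rule R.

Lemma hom_ext A B (Q : trig -> list atom -> Prop) :
  chase_derivation X Rs F A -> derivation Rs F B ->
  (forall t, Rs (fst t) -> hom (snd t) (body (fst t)) (fb F B) ->
     exists p, p < length B /\ equivX X t (tr B p) /\ Q (tr B p) (bimg t)) ->
  exists h idx, fixnn h /\ (forall a, fb F A a -> fb F B (maph h a)) /\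
   (forall k, k < length A -> idx k < length B /\ equivX X (th h (tr A k)) (tr B (idx k)) /\
      Q (tr B (idx k)) (bimg (th h (tr A k))) /\
      forall z, ~ In z (bvars (tr A k)) -> h (nullof (tr A k) z) = nullof (tr B (idx k)) z) /\
   (forall k k', k < length A -> k' < length A -> idx k = idx k' -> k = k').
Proof.
  intros [DA AA] DB CL.
  assert (WA : wfd F A) by (eapply deriv_wfd; eauto).
  assert (RA : forall k, k < length A -> Rs (fst (tr A k))) by (intros; apply DA; auto).
  assert (HWA : forall k, k < length A -> wf_rule (fst (tr A k))) by (intros; apply HR, RA; auto).
  assert (Inv : forall i, i <= length A -> exists h idx, fixnn h /\
    (forall k, k < i -> idx k < length B /\ equivX X (th h (tr A k)) (tr B (idx k)) /\
      Q (tr B (idx k)) (bimg (th h (tr A k))) /\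
      forall z, ~ In z (bvars (tr A k)) -> h (nullof (tr A k) z) = nullof (tr B (idx k)) z) /\
    (forall k k', k < i -> k' < i -> idx k = idx k' -> k = k') /\
    (forall a, fb F (firstn i A) a -> fb F B (maph h a)) /\
    (forall u v, occurs F (firstn i A) u -> occurs F (firstn i A) v -> h u = h v -> u = v)).
  2:{ destruct (Inv (length A) (le_n _)) as (h & idx & I1 & I2 & I3 & I4 & I5).
      exists h, idx. rewrite firstn_all in I4. repeat split; auto; apply I2; auto. }
  induction i as [|i IH]; intros Hi.
  { exists (fun u => u), (fun _ => 0). split; [intros u _; auto|]. split; [intros; lia|].
    split; [intros; lia|]. split; [|auto].
    intros a [Fa|(t & [] & _)]. left. rewrite maph_plain; auto. intros u _; auto. }
  destruct (IH ltac:(lia)) as (h & idx & I1 & I2 & I3 & I4 & I5). clear IH.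
  set (t := tr A i). assert (Hi' : i < length A) by lia.
  assert (Rt : Rs (fst t)) by (apply RA; auto).
  assert (Ht : hom (snd t) (body (fst t)) (fb F (firstn i A))) by (apply WA; auto).
  assert (At : applicable X Rs F (firstn i A) t) by (apply AA; auto).
  assert (Wt : wf_rule (fst t)) by (apply HR; auto).
  destruct (CL (th h t)) as (p & Hp & Heq & HQ); auto.
  { intros b Hb. unfold th in *; simpl in *.
    assert (Pb : plain_atom b) by (destruct Wt as [Wb _]; rewrite Forall_forall in Wb; auto).
    rewrite (subst_th b (snd t) h Pb I1). apply I4, Ht; auto. }
  set (s := tr B p) in *.
  assert (Est : fst s = fst t) by (apply Heq).
  assert (Bst : bvars s = bvars t) by (unfold bvars; rewrite Est; auto).
  set (h' := fun u => match u with
    | Null b0 h0 img z => if excluded_middle_informative (Null b0 h0 img z = nullof t z)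
                          then sk s z else h u
    | _ => h u end).
  assert (h'_old : forall u, (forall z, u <> nullof t z) -> h' u = h u).
  { intros u Hu. destruct u; simpl; auto. destruct excluded_middle_informative as [e|]; auto.
    exfalso; eapply Hu; eauto. }
  assert (h'_new : forall z, ~ In z (bvars t) -> h' (nullof t z) = nullof s z).
  { intros z Hz. unfold h'. unfold nullof at 1. destruct excluded_middle_informative as [e|n].
    rewrite sk_out; auto. rewrite Bst; auto. exfalso; apply n; reflexivity. }
  assert (K2 : forall k z z', k < i -> nullof (tr A k) z' <> nullof t z).
  { intros k z z' Hk E. apply nullof_inj in E as [_ E].
    apply (deriv_distinct Rs F A k i); auto; lia. }
  assert (K1 : forall u, occurs F (firstn i A) u -> forall z, u <> nullof t z).
  { intros u Hu z E. destruct (occurs_cases F A HF WA HWA i u Hu) as [H|(k & z' & ? & ? & ? & ->)].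
    subst; apply H; exact I. eapply K2; eauto. }
  assert (K3 : forall k x, k <= i -> In x (bvars (tr A k)) -> occurs F (firstn i A) (snd (tr A k) x)).
  { intros k x Hk Hx. apply (occurs_mono F A k); auto. apply occurs_snd; auto. apply WA; lia. }
  assert (Eh : forall u, occurs F (firstn i A) u -> h' u = h u).
  { intros; apply h'_old; apply K1; auto. }
  assert (I1' : fixnn h').
  { intros u Hu. destruct u; simpl in *; try tauto; apply I1; simpl; auto. }
  assert (Heq' : equivX X (th h' t) s).
  { eapply equivX_ext; [| |exact Heq]; auto. intros x Hx. unfold th; simpl. symmetry; apply Eh, K3; auto. }
  assert (HQ' : Q s (bimg (th h' t))).
  { erewrite bimg_ext; [exact HQ| |]; auto. intros x Hx. unfold th; simpl. apply Eh, K3; auto. }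
  assert (Hnew : forall k, k < i -> idx k <> p).
  { intros k Hk E. destruct (I2 k Hk) as (_ & Ek & _ & _). rewrite E in Ek. fold s in Ek.
    set (tk := tr A k) in *.
    assert (Ekt : fst tk = fst t) by (destruct Ek as [E1 _]; destruct Heq as [E2 _]; simpl in *; congruence).
    apply (app_no_equiv X Rs F (firstn i A) t tk At).
    { apply nth_In_firstn; lia. }
    assert (Bk : forall x, In x (bvars t) -> In x (bvars (tr A k))).
    { intros x0. unfold bvars. change (tr A k) with tk. rewrite Ekt; auto. }
    destruct X; destruct Ek as [_ Ek]; destruct Heq as [_ Hq]; split; auto.
    - intros x Hx. apply I5. apply K3; [lia| apply Bk; exact Hx]. apply K3; [lia|exact Hx].
      transitivity (snd s x); [symmetry; apply Ek; apply Bk; exact Hx| apply Hq; exact Hx].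
    - intros x Hx. assert (Hb : In x (bvars t)) by apply Hx.
      apply I5. apply K3; [lia| apply Bk; exact Hb]. apply K3; [lia|exact Hb].
      transitivity (snd s x); [symmetry; apply Ek| apply Hq; exact Hx]. simpl. rewrite Ekt; exact Hx. }
  assert (Hold_img : forall u, occurs F (firstn i A) u -> (~ isnull u /\ h u = u) \/
     exists k z, k < i /\ u = nullof (tr A k) z /\ h u = nullof (tr B (idx k)) z).
  { intros u Hu. destruct (occurs_cases F A HF WA HWA i u Hu) as [H|(k & z & ? & ? & ? & ->)].
    left; split; auto. right. exists k, z; repeat split; auto. apply I2; auto. }
  exists h', (fun k => if Nat.eqb k i then p else idx k).
  split; [exact I1'|]. split; [|split; [|split]].
  - intros k Hk. destruct (Nat.eqb_spec k i) as [->|Hki].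
    + split; [auto|]. split; [exact Heq'|]. split; [exact HQ'|]. intros z Hz. apply h'_new; auto.
    + assert (Hk' : k < i) by lia. destruct (I2 k Hk') as (? & Ek & Qk & Nk).
      assert (Ag : forall x, In x (bvars (th h (tr A k))) -> snd (th h (tr A k)) x = snd (th h' (tr A k)) x).
      { intros x Hx. unfold th; simpl. symmetry; apply Eh, K3; auto; lia. }
      replace (k =? i) with false by (symmetry; apply Nat.eqb_neq; auto).
      split; [auto|]. split; [|split].
      * eapply equivX_ext; [| |exact Ek]; auto.
      * erewrite <- bimg_ext; [exact Qk| |]; auto.
      * intros z Hz. rewrite h'_old; auto.
  - intros k k' Hk Hk' E. destruct (Nat.eqb_spec k i), (Nat.eqb_spec k' i); subst; auto.
    + exfalso; apply (Hnew k'); auto; lia.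
    + exfalso; apply (Hnew k); auto; lia.
    + apply I3; auto; lia.
  - intros a Ha. apply fb_firstn_S in Ha as [Ha|Ha]; auto.
    + replace (maph h' a) with (maph h a). apply I4; auto.
      unfold maph; f_equal. apply map_ext_in. intros u Hu. symmetry; apply Eh. exists a; auto.
    + fold t in Ha. unfold produced in Ha. apply in_map_iff in Ha as (A0 & <- & HA).
      right. exists s. split. apply nth_In; auto.
      unfold produced. rewrite Est. apply in_map_iff. exists A0; split; auto.
      symmetry. apply prod_map; auto.
      intros x Hx. apply equivX_front in Heq' as [_ E]. rewrite E; auto.
  - intros u v Hu Hv E.
    assert (C : forall w, occurs F (firstn (S i) A) w -> occurs F (firstn i A) w \/ ~ isnull w \/
              exists z, ~ In z (bvars t) /\ w = nullof t z).
    { intros w Hw. apply occurs_S; auto. }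
    assert (Vals : forall w, occurs F (firstn (S i) A) w ->
      (occurs F (firstn i A) w /\ h' w = h w) \/ (~ isnull w /\ h' w = w) \/
      (exists z, ~ In z (bvars t) /\ w = nullof t z /\ h' w = nullof s z)).
    { intros w Hw. destruct (C w Hw) as [H|[H|(z & Hz & ->)]].
      left; split; auto. right; left; split; auto. right; right; exists z; repeat split; auto. }
    assert (OldNN : forall u v, occurs F (firstn i A) u -> ~ isnull v -> h u = v -> u = v).
    { intros u0 v0 Hu0 Hv0 E0. destruct (Hold_img u0 Hu0) as [[_ E1]|(k & z & _ & -> & E1)].
      congruence. rewrite E1 in E0. subst v0. exfalso; apply Hv0; exact I. }
    assert (OldNew : forall u z, occurs F (firstn i A) u -> h u <> nullof s z).
    { intros u0 z Hu0 E0. destruct (Hold_img u0 Hu0) as [[Hn E1]|(k & z' & Hk & -> & E1)].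
      rewrite E1 in E0; subst; apply Hn; exact I.
      rewrite E1 in E0. apply nullof_inj in E0 as [_ E0].
      destruct (Nat.eq_dec (idx k) p) as [e|ne]. apply (Hnew k Hk e).
      apply (deriv_distinct Rs F B (idx k) p); auto. apply I2; auto. }
    destruct (Vals u Hu) as [[Ou Eu]|[[Nu Eu]|(z & Hz & -> & Eu)]];
    destruct (Vals v Hv) as [[Ov Ev]|[[Nv Ev]|(z' & Hz' & -> & Ev)]]; rewrite Eu, Ev in E.
    + apply I5; auto.
    + apply OldNN; auto.
    + exfalso; eapply OldNew; eauto.
    + symmetry; apply OldNN; auto.
    + auto.
    + subst. exfalso; apply Nu; exact I.
    + exfalso; eapply OldNew; eauto.
    + subst. exfalso; apply Nv; exact I.
    + apply nullof_inj in E as [-> _]; auto.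
Qed.

End HomExt.


Section Greedy.
Variable X : chase_variant.
Variable F : factbase.
Variable Rs : rule -> Prop.
Hypothesis HF : forall a, F a -> plain_atom a.
Hypothesis HR : forall R, Rs R -> wf_rule R.

Lemma hom_in s B G a : hom s B G -> In a (map (subst_atom s) B) -> G a.
Proof. intros H Ha. apply in_map_iff in Ha as (b & <- & Hb); auto. Qed.

Definition greedy D := chase_derivation X Rs F D /\
  forall i, i < length D -> forall t, applicable X Rs F (firstn i D) t ->
    forall m m', trank F (firstn i D) (tr D i) m -> trank F (firstn i D) t m' -> m <= m'.

Definition closedD D := forall t, ~ applicable X Rs F D t.

Lemma appl_hom L t : applicable X Rs F L t -> Rs (fst t) /\ hom (snd t) (body (fst t)) (fb F L).
Proof. destruct X; simpl; unfold SO_applicable, O_applicable; tauto. Qed.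

Lemma appl_O L t : applicable X Rs F L t -> ~ (exists t', In t' L /\ same_trig t' t).
Proof. destruct X; simpl; unfold SO_applicable, O_applicable; tauto. Qed.

Lemma appl_down L L' t : (forall x, In x L -> In x L') -> applicable X Rs F L' t ->
  hom (snd t) (body (fst t)) (fb F L) -> applicable X Rs F L t.
Proof.
  intros Hs Ha Hh. destruct X; simpl in *; unfold SO_applicable, O_applicable in *.
  - destruct Ha as (? & ? & Hn). repeat split; auto. intros (t' & ? & ?); apply Hn; eauto.
  - destruct Ha as ((? & ? & Hn) & Hn2). repeat split; auto. intros (t' & ? & ?); apply Hn; eauto.
    intros (t' & ? & ?); apply Hn2; eauto.
Qed.

Lemma fb_app L s a : fb F L a -> fb F (L ++ [s]) a.
Proof. intros [H|(t & Ht & Hp)]; [left; auto|right; exists t; split; auto; apply in_or_app; auto]. Qed.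

Lemma blocked L t s : applicable X Rs F L t -> ~ applicable X Rs F (L ++ [s]) t -> equivX X t s.
Proof.
  intros Ha Hn. destruct (appl_hom L t Ha) as [HRt Hh].
  destruct (notapp_equiv X Rs F (L ++ [s]) t HRt) as (t' & Hin & He); auto.
  { intros b Hb. apply fb_app, Hh; auto. }
  apply in_app_or in Hin as [Hin|[<-|[]]]; auto.
  exfalso; eapply app_no_equiv; eauto.
Qed.

Lemma first_prod_rank D n b : n < length D -> fb F (firstn (S n) D) b -> ~ fb F (firstn n D) b ->
  forall m, trank F D (tr D n) m -> arank F D b m.
Proof.
  intros Hn Hb Hnb m (rs & Hrs & ->). apply fb_firstn_S in Hb as [Hb|Hb]; auto; [contradiction|].
  apply arank_step with n; auto.
  - intro; apply Hnb; left; auto.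
  - intros j' Hj' Hp. apply Hnb. right. exists (tr D j'); split; auto. apply nth_In_firstn; lia.
Qed.

Lemma trank_exists D t : wfd F D -> hom (snd t) (body (fst t)) (fb F D) -> exists m, trank F D t m.
Proof. intros W H. apply trank_l_exists; auto. apply hom_bimg; auto. Qed.

Lemma tr_trank_exists D k : wfd F D -> k < length D -> exists m, trank F D (tr D k) m.
Proof. intros W Hk. apply trank_exists; auto. intros b Hb. eapply fb_firstn_sub. apply W; eauto. Qed.

Lemma greedy_wfd D : greedy D -> wfd F D.
Proof. intros [[DD _] _]. eapply deriv_wfd; eauto. Qed.

Lemma mono_adj D i m m' : greedy D -> S i < length D -> trank F D (tr D i) m ->
  trank F D (tr D (S i)) m' -> m <= m'.
Proof.
  intros G Hi Tm Tm'. pose proof (greedy_wfd D G) as W.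
  destruct G as [[DD AA] GG].
  set (t1 := tr D (S i)) in *.
  assert (At1 : applicable X Rs F (firstn (S i) D) t1) by (apply AA; auto).
  destruct (classic (hom (snd t1) (body (fst t1)) (fb F (firstn i D)))) as [Hh|Hh].
  - assert (Ai : applicable X Rs F (firstn i D) t1).
    { apply (appl_down (firstn i D) (firstn (S i) D) t1); [|exact At1|exact Hh].
      intros x Hx; eapply firstn_mono_In; [|exact Hx]; lia. }
    apply (GG i ltac:(lia) t1 Ai).
    + apply trank_l_down; auto. intros a Ha. eapply hom_in; [apply W; lia|exact Ha].
    + apply trank_l_down; auto. apply hom_bimg; auto.
  - apply not_all_ex_not in Hh as [b Hb]. apply imply_to_and in Hb as [Hb Hnb].
    assert (Hb' : fb F (firstn (S i) D) (subst_atom (snd t1) b)) by (apply W; auto).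
    pose proof (first_prod_rank D i _ ltac:(lia) Hb' Hnb m Tm) as Ar.
    apply Nat.lt_le_incl. eapply trank_l_ge; eauto. apply in_map; auto.
Qed.

Lemma mono D j j' rj rj' : greedy D -> j <= j' -> j' < length D ->
  trank F D (tr D j) rj -> trank F D (tr D j') rj' -> rj <= rj'.
Proof.
  intros G Hjj'. revert rj'. induction Hjj' as [|j' Hjj' IH]; intros rj' Hj' T T'.
  - rewrite (trank_l_fun F D (bimg (tr D j)) rj rj'); auto.
  - destruct (tr_trank_exists D j' (greedy_wfd D G) ltac:(lia)) as [m Hm].
    specialize (IH m ltac:(lia) T Hm). pose proof (mono_adj D j' m rj' G Hj' Hm T'). lia.
Qed.

Lemma rank_bound D j k x r : greedy D -> j < length D -> trank F D (tr D j) k ->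
  fb F (firstn (S j) D) x -> arank F D x r -> r <= k.
Proof.
  intros G Hj Tk Hx Hr. inversion Hr as [? Fx|? j0 rs0 nF lt0 pr0 mn0 FA0]; subst. lia.
  destruct Hx as [Fx|(t & Ht & Hp)]; [contradiction|].
  apply In_firstn_nth with (d := trig_dflt) in Ht as (q & Hq & Hq' & ->).
  assert (j0 <= q). { destruct (Nat.le_gt_cases j0 q); auto. exfalso; apply (mn0 q); auto. }
  eapply (mono D j0 j); eauto. lia. exists rs0; auto.
Qed.

Lemma greedy_BF D : greedy D -> closedD D -> breadth_first X Rs F D.
Proof.
  intros G C. pose proof (greedy_wfd D G) as W. split.
  - intros j j' rj rj' H1 H2 T1 T2; exact (mono D j j' rj rj' G H1 H2 T1 T2).
  - intros j k Hj Tk Hno t At.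
    destruct (appl_hom _ _ At) as [HRt Ht].
    destruct (trank_exists D t W) as [m Tm].
    { intros b Hb. eapply fb_firstn_sub. apply Ht; auto. }
    assert (Up : m <= S k).
    { destruct Tm as (rs & Hrs & ->). apply le_n_S, max_list_le. intros r Hr.
      destruct (Forall2_In_l _ _ _ _ Hrs Hr) as (x & Hx & Ar).
      eapply rank_bound; eauto. eapply hom_in; [exact Ht|exact Hx]. }
    assert (Lo : S k <= m).
    { destruct (Nat.lt_ge_cases (S j) (length D)) as [HS|HS].
      - destruct (tr_trank_exists D (S j) W HS) as [m1 Hm1].
        assert (k <= m1) by (eapply (mono D j (S j)); eauto).
        assert (m1 <> k) by (intros ->; apply (Hno (S j)); auto).
        assert (m1 <= m).
        { apply (proj2 G (S j) HS t At).
          - apply trank_l_down; auto. intros a Ha. eapply hom_in; [apply W; lia|exact Ha].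
          - apply trank_l_down; auto. apply hom_bimg; auto. }
        lia.
      - exfalso. apply (C t). rewrite (firstn_all2 (n := S j) D) in At by lia. exact At. }
    replace (S k) with m by lia. apply trank_l_down; auto. apply hom_bimg; auto.
Qed.

Lemma snoc_firstn (D : list trig) t0 i : i <= length D -> firstn i (D ++ [t0]) = firstn i D.
Proof. intros H. rewrite firstn_app. replace (i - length D) with 0 by lia. simpl. apply app_nil_r. Qed.

Lemma snoc_tr D t0 i : i < length D -> tr (D ++ [t0]) i = tr D i.
Proof. intros; unfold tr; apply app_nth1; auto. Qed.

Lemma snoc_last D t0 : tr (D ++ [t0]) (length D) = t0.
Proof. unfold tr. rewrite app_nth2 by lia. rewrite Nat.sub_diag. reflexivity. Qed.

Lemma greedy_snoc D' t0 m0 : greedy D' -> applicable X Rs F D' t0 -> trank F D' t0 m0 ->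
  (forall t m, applicable X Rs F D' t -> trank F D' t m -> m0 <= m) -> greedy (D' ++ [t0]).
Proof.
  intros G A0 T0 Min. destruct G as [[[DD1 DD2] AA] GG].
  assert (Len : length (D' ++ [t0]) = S (length D')) by (rewrite length_app; simpl; lia).
  split; [split; [split|]|]; rewrite Len.
  - intros i Hi; destruct (Nat.lt_ge_cases i (length D')) as [Hi'|Hi'].
    + pose proof (snoc_tr D' t0 i Hi') as E1. unfold tr in E1. rewrite E1, snoc_firstn by lia. apply DD1; auto.
    + replace i with (length D') by lia. pose proof (snoc_last D' t0) as E1. unfold tr in E1.
      rewrite E1, snoc_firstn, firstn_all by lia. apply appl_hom; auto.
  - intros i j Hij Hj; destruct (Nat.lt_ge_cases j (length D')) as [Hj'|Hj'].
    + pose proof (snoc_tr D' t0 i ltac:(lia)) as E1. pose proof (snoc_tr D' t0 j Hj') as E2.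
      unfold tr in E1, E2. rewrite E1, E2. apply DD2; auto.
    + replace j with (length D') by lia. pose proof (snoc_last D' t0) as E1.
      pose proof (snoc_tr D' t0 i ltac:(lia)) as E2. unfold tr in E1, E2. rewrite E1, E2.
      intro Hs; apply (appl_O D' t0 A0); exists (tr D' i); split; auto; apply nth_In; lia.
  - intros i Hi; destruct (Nat.lt_ge_cases i (length D')) as [Hi'|Hi'].
    + pose proof (snoc_tr D' t0 i Hi') as E1. unfold tr in E1. rewrite E1, snoc_firstn by lia. apply AA; auto.
    + replace i with (length D') by lia. pose proof (snoc_last D' t0) as E1. unfold tr in E1.
      rewrite E1, snoc_firstn, firstn_all by lia. auto.
  - intros i Hi t At m m' Tm Tm'; destruct (Nat.lt_ge_cases i (length D')) as [Hi'|Hi'].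
    + rewrite snoc_tr, snoc_firstn in * by lia. eapply GG; eauto.
    + replace i with (length D') in * by lia. rewrite snoc_last, snoc_firstn, firstn_all in * by lia.
      rewrite (trank_l_fun F D' (bimg t0) m m0); auto. eapply Min; eauto.
Qed.

Lemma build N : (forall D', chase_derivation X Rs F D' -> length D' <= N) ->
  exists D', greedy D' /\ closedD D'.
Proof.
  intros Bd.
  assert (Main : forall n D', greedy D' -> N - length D' <= n -> exists D'', greedy D'' /\ closedD D'').
  2:{ apply (Main N []); [|simpl; lia]. split. split. split; simpl; intros; lia. simpl; intros; lia.
      simpl; intros; lia. }
  induction n as [|n IH]; intros D' G Hn;
  (destruct (classic (exists t, applicable X Rs F D' t)) as [Ex|Nex];
   [|exists D'; split; auto; intros t At; apply Nex; eauto]).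
  all: pose proof (greedy_wfd D' G) as W.
  all: destruct (min_nat (fun m => exists t, applicable X Rs F D' t /\ trank F D' t m)) as (m0 & (t0 & A0 & T0) & Min);
    [destruct Ex as [t At]; destruct (trank_exists D' t W) as [m Tm]; [apply appl_hom; auto|];
     exists m, t; auto|].
  all: assert (G' : greedy (D' ++ [t0])) by (apply (greedy_snoc D' t0 m0); auto; intros t m At Tm; apply Min; eauto).
  all: pose proof (Bd (D' ++ [t0]) (proj1 G')) as B'; rewrite length_app in B'; simpl in B'.
  - lia.
  - apply (IH (D' ++ [t0])); auto. rewrite length_app; simpl; lia.
Qed.

Lemma closed_of_exh D : exhaustive X Rs F D -> closedD D.
Proof.
  intros E t At. rewrite <- (firstn_all D) in At.
  destruct (E (length D) t (le_n _) At) as [(k & ? & ? & _)|(k & ? & ? & Hn)]. lia.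
  replace k with (length D) in Hn by lia. contradiction.
Qed.

Lemma closure_plain D (Q : trig -> list atom -> Prop) : closedD D -> (forall s L, Q s L) ->
  forall t, Rs (fst t) -> hom (snd t) (body (fst t)) (fb F D) ->
     exists p, p < length D /\ equivX X t (tr D p) /\ Q (tr D p) (bimg t).
Proof.
  intros C HQ t HRt Hh. destruct (notapp_equiv X Rs F D t HRt Hh (C t)) as (t' & Hin & He).
  apply In_nth with (d := trig_dflt) in Hin as (p & Hp & <-). exists p; auto.
Qed.

Definition Qr D (s : trig) (L : list atom) :=
  forall m, trank_l F D L m -> exists m', trank F D s m' /\ m' <= m.

Lemma closure_greedy D : greedy D -> closedD D ->
  forall t, Rs (fst t) -> hom (snd t) (body (fst t)) (fb F D) ->
     exists p, p < length D /\ equivX X t (tr D p) /\ Qr D (tr D p) (bimg t).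
Proof.
  intros G C t HRt Hh. pose proof (greedy_wfd D G) as W.
  destruct (trank_exists D t W Hh) as [m0 T0].
  enough (exists p, p < length D /\ equivX X t (tr D p) /\ exists m', trank F D (tr D p) m' /\ m' <= m0) as
    (p & Hp & He & m' & Tm' & Le).
  { exists p; split; [auto|split; [auto|]]. intros m Tm. exists m'. rewrite (trank_l_fun F D (bimg t) m m0); auto. }
  destruct (min_nat (fun n => hom (snd t) (body (fst t)) (fb F (firstn n D)))) as (q & Hq & Mq).
  { exists (length D). rewrite firstn_all; auto. }
  assert (qle : q <= length D) by (apply Mq; rewrite firstn_all; auto).
  destruct (classic (applicable X Rs F (firstn q D) t)) as [Aq|NAq].
  - destruct (switch_nat (fun n => applicable X Rs F (firstn n D) t) q (length D)) as (n & ? & Hn & An & NAn); auto.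
    { rewrite firstn_all; apply C. }
    exists n. split; auto. split.
    { apply (blocked (firstn n D) t (tr D n) An). unfold tr; rewrite <- firstn_S_nth; auto. }
    destruct (tr_trank_exists D n W Hn) as [m1 T1]. exists m1; split; auto.
    destruct (appl_hom _ _ An) as [_ Hhn].
    apply (proj2 G n Hn t An).
    + apply trank_l_down; auto. intros a Ha. eapply hom_in; [apply W; lia|exact Ha].
    + apply trank_l_down; auto. apply hom_bimg; auto.
  - destruct (notapp_equiv X Rs F (firstn q D) t HRt Hq NAq) as (t' & Hin & He).
    apply In_firstn_nth with (d := trig_dflt) in Hin as (p & Hpq & Hp & ->).
    exists p; split; auto; split; auto.
    destruct q as [|q']; [lia|].
    assert (Nh : ~ hom (snd t) (body (fst t)) (fb F (firstn q' D))) by (intro H'; specialize (Mq q' H'); lia).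
    apply not_all_ex_not in Nh as [b Hb]. apply imply_to_and in Hb as [Hb Hnb].
    destruct (tr_trank_exists D q' W ltac:(lia)) as [m1 T1].
    pose proof (first_prod_rank D q' _ ltac:(lia) (Hq b Hb) Hnb m1 T1) as Ar.
    assert (m1 < m0) by (eapply trank_l_ge; eauto; apply in_map; auto).
    destruct (tr_trank_exists D p W Hp) as [m2 T2]. exists m2; split; auto.
    assert (m2 <= m1) by (eapply (mono D p q'); eauto; lia). lia.
Qed.

End Greedy.


Section Final.
Variable X : chase_variant.
Variable F : factbase.
Variable Rs : rule -> Prop.
Hypothesis HF : forall a, F a -> plain_atom a.
Hypothesis HR : forall R, Rs R -> wf_rule R.

Lemma rank_transfer D D' h idx : derivation Rs F D -> greedy X F Rs D' -> fixnn h ->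
  (forall k, k < length D -> idx k < length D' /\ equivX X (th h (tr D k)) (tr D' (idx k)) /\
      Qr F D' (tr D' (idx k)) (bimg (th h (tr D k))) /\
      forall z, ~ In z (bvars (tr D k)) -> h (nullof (tr D k) z) = nullof (tr D' (idx k)) z) ->
  forall a r, arank F D a r -> exists r', arank F D' (maph h a) r' /\ r' <= r.
Proof.
  intros DD G Hh I2. pose proof (greedy_wfd X F Rs D' G) as W'.
  apply arank_ind'.
  - intros a Fa. exists 0. rewrite maph_plain; auto. split; [constructor; auto|lia].
  - intros a j rs nF lt pr mn FA IH.
    destruct (I2 j lt) as (Hij & Ej & Qj & Nj).
    assert (Wj : wf_rule (fst (tr D j))) by (apply HR; apply DD; auto).
    destruct (Forall2_le_max _ (fun x r' => arank F D' (maph h x) r') _ _ IH) as (rs' & Hrs' & Le).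
    { intros x r0 _ H; exact H. }
    assert (Tl : trank_l F D' (bimg (th h (tr D j))) (S (max_list rs'))).
    { exists rs'; split; auto. rewrite bimg_th; auto. apply Forall2_map_l; auto. apply Wj. }
    destruct (Qj _ Tl) as (m' & Tm' & Lm').
    set (s := tr D' (idx j)) in *.
    assert (Ps : produced s (maph h a)).
    { unfold produced in pr. apply in_map_iff in pr as (A0 & <- & HA).
      apply equivX_front in Ej as [Es Ef]. simpl in Es.
      unfold produced. rewrite Es. apply in_map_iff. exists A0; split; auto.
      symmetry. apply prod_map; auto. }
    assert (Fb : fb F D' (maph h a)) by (right; exists s; split; auto; apply nth_In; auto).
    destruct (arank_exists F D' _ W' Fb) as [r0 Hr0]. exists r0. split; auto.
    inversion Hr0 as [? Fx|? j0 rs0 nF0 lt0 pr0 mn0 FA0]; subst. lia.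
    assert (j0 <= idx j). { destruct (Nat.le_gt_cases j0 (idx j)); auto. exfalso; apply (mn0 (idx j)); auto. }
    assert (S (max_list rs0) <= m') by (eapply (mono X F Rs D' j0 (idx j)); eauto; exists rs0; auto).
    lia.
Qed.

Theorem main (D : list trig) :
    chase_derivation X Rs F D -> exhaustive X Rs F D ->
    exists D' : list trig,
      chase_derivation X Rs F D' /\ exhaustive X Rs F D' /\
      breadth_first X Rs F D' /\
      (forall d, depth_le F D d -> depth_le F D' d).
Proof.
  intros CD EX.
  assert (CLD := closed_of_exh X F Rs D EX).
  assert (Bd : forall D', chase_derivation X Rs F D' -> length D' <= length D).
  { intros D' CD'. destruct (hom_ext X F Rs HF HR D' D (fun _ _ => True) CD' (proj1 CD)) as
      (g & idx & _ & _ & I2 & I3).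
    { intros t Ht Hh'; apply (closure_plain X F Rs D (fun _ _ => True)); auto. }
    apply (inj_le idx (length D') (length D)); auto. intros i Hi; apply I2; auto. }
  destruct (build X F Rs (length D) Bd) as (D' & G & C).
  exists D'. split; [apply G|]. split; [|split].
  - intros i t Hi At. right. exists (length D'). split; [lia|split; [lia|]].
    rewrite firstn_all; apply C.
  - apply greedy_BF; auto.
  - intros d Hd a r Har.
    destruct (hom_ext X F Rs HF HR D D' (Qr F D') CD (proj1 (proj1 G))) as
      (h & idx & Hh & Hfb & I2 & I3).
    { apply closure_greedy; auto. }
    assert (Le1 : length D' <= length D) by (apply Bd, G).
    assert (Le2 : length D <= length D') by (apply (inj_le idx); auto; intros i Hi; apply I2; auto).
    inversion Har as [? Fa|? j rs nF lt pr mn FA]; subst. lia.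
    destruct (inj_surj idx (length D)) with (q := j) as (k & Hk & Ek).
    { intros i Hi. destruct (I2 i Hi) as (? & _). lia. }
    { auto. }
    { lia. }
    destruct (I2 k Hk) as (_ & Ekq & _ & Nk).
    rewrite Ek in Ekq, Nk.
    assert (Wk : wf_rule (fst (tr D k))) by (apply HR; apply (proj1 CD); auto).
    apply equivX_front in Ekq as [Es Ef]. simpl in Es.
    unfold produced in pr. apply in_map_iff in pr as (A0 & <- & HA).
    fold (tr D' j) in *. rewrite Es in HA.
    assert (Ea : maph h (subst_atom (sk (tr D k)) A0) = subst_atom (sk (tr D' j)) A0) by (apply prod_map; auto).
    assert (Fa0 : fb F D (subst_atom (sk (tr D k)) A0)).
    { right. exists (tr D k); split. apply nth_In; auto. apply in_map; auto. }
    destruct (arank_exists F D _ (deriv_wfd _ _ _ (proj1 CD)) Fa0) as [r0 Hr0].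
    destruct (rank_transfer D D' h idx (proj1 CD) G Hh I2 _ _ Hr0) as (r' & Hr' & Le).
    rewrite Ea in Hr'. rewrite (arank_fun F D' _ _ _ Har Hr'). specialize (Hd _ _ Hr0). lia.
Qed.

End Final.

Theorem proposition1 (X : chase_variant) (F : factbase) (Rs : rule -> Prop) :
  (forall a, F a -> plain_atom a) ->
  (forall R, Rs R -> wf_rule R) ->
  forall D : list trig,
    chase_derivation X Rs F D -> exhaustive X Rs F D ->
    exists D' : list trig,
      chase_derivation X Rs F D' /\ exhaustive X Rs F D' /\
      breadth_first X Rs F D' /\
      (forall d, depth_le F D d -> depth_le F D' d).
Proof.
  intros HF HR D. exact (main X F Rs HF HR D).
Qed.
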